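(* For every FEE problem $(I,O,\succsim_I,\omega)$ and every FTTC mechanism on the full preference domain, the output assignment $p$ is individually rational (i.e., $p_i\succsim^{sd}_i\omega_i$ for all $i\in I$) and sd-efficient (no assignment strictly stochastically dominates $p$).
   Context: Fractional endowment exchange (FEE) problem: a tuple $(I,O,\succsim_I,\omega)$ where $I$ is a finite set of agents, $O$ a finite set of objects, each agent $i$ has a complete and transitive (possibly non-strict) preference relation $\succsim_i$ over $O$ with asymmetric part $\succ_i$ and symmetric part $\sim_i$, and $\omega=(\omega_{i,o})_{i\in I,o\in O}$ is an endowment matrix with $\omega_{i,o}\in[0,1]$, $\sum_{o\in O}\omega_{i,o}\le 1$ for each $i$, and $q_o=\sum_{i\in I}\omega_{i,o}$ an integer for each $o$. An assignment is a nonnegative matrix $p=(p_{i,o})$ with $\sum_i p_{i,o}\le q_o$ for all $o$ and $\sum_o p_{i,o}\le 1$ for all $i$; $p_i=(p_{i,o})_{o\in O}$ is $i$'s lottery. Stochastic dominance: for vectors $l,l'\in\mathbb R^{O}_+$, $l\succsim^{sd}_i l'$ if $\sum_{o'\succsim_i o}l_{o'}\ge\sum_{o'\succsim_i o}l'_{o'}$ for all $o\in O$, strictly ($\succ^{sd}_i$) if moreover some inequality is strict. An assignment $p$ strictly stochastically dominates $p'$ if $p_i\succsim^{sd}_ip'_i$ for all $i$ and $p_j\succ^{sd}_jp'_j$ for some $j$. FTTC (Fractional Top Trading Cycle) on the full preference domain. Initialize $\omega(0)=\omega$, $p(0)=0$, $O(0)=O$. At step $d\ge1$ (with $O(d-1)\ne\emptyset$):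 (i) Labeling. Put $T_0=O(d-1)$. For $k=1,2,\dots$: let $L_k$ be the set of agents $i\notin L_1\cup\dots\cup L_{k-1}$ for which there exist $o\in T_{k-1}$ and $o'\in O\setminus(T_0\cup\dots\cup T_{k-1})$ with $p_{i,o'}(d-1)>0$ and $o\sim_i o'$; for $i\in L_k$ let $\tilde O_i(d-1)$ be the set of all such $o'$ for this $i$, and let $T_k=\bigcup_{i\in L_k}\tilde O_i(d-1)$. Stop at the first $k$ with $L_k=\emptyset$. Set $L(d-1)=\bigcup_k L_k$, $\tilde O(d-1)=\bigcup_{k\ge1}T_k$, $\overline{O}(d-1)=O(d-1)\cup\tilde O(d-1)$, and $\tilde O_i(d-1)=\emptyset$ for $i\notin L(d-1)$. (ii) Pointing. The active agents are $I(d-1)=L(d-1)\cup\{i\in I:\sum_o\omega_{i,o}(d-1)>0\}$. For $i\in I(d-1)$ let $B_i$ be the set of $\succsim_i$-maximal elements of $\overline{O}(d-1)$, let $k_i$ be the least $k\ge0$ with $B_i\cap T_k\ne\emptyset$, and let $A_i(d)=B_i\cap T_{k_i}$. (iii) Trading. The mechanism chooses (possibly depending on the history): a ratio matrix $\lambda(d)=(\lambda_{i,o}(d))_{i\in I(d-1),o\in\overline{O}(d-1)}$, nonnegative, with $\sum_{i\in I(d-1)}\lambda_{i,o}(d)=1$ for each $o\in\overline O(d-1)$, $\lambda_{i,o}(d)>0$ only if $\omega_{i,o}(d-1)>0$ (for $o\in O(d-1)$) and only if $o\in\tilde O_i(d-1)$ (for $o\in\tilde O(d-1)$); a quota matrix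 $\beta(d)$ on $I(d-1)\times O(d-1)$ with $0\le\beta_{i,o}(d)\le\omega_{i,o}(d-1)$; a division matrix $\gamma(d)$ on $I(d-1)\times\overline O(d-1)$, nonnegative, with $\sum_o\gamma_{i,o}(d)=1$ and $\gamma_{i,o}(d)>0$ only if $o\in A_i(d)$. Let $x^*(d)=(x^*_a(d))_{a\in I(d-1)\cup\overline O(d-1)}$ be the maximum (componentwise largest) nonnegative solution of $x_o=\sum_{i\in I(d-1)}\gamma_{i,o}(d)x_i$ for all $o\in\overline O(d-1)$ and $x_i=\sum_{o\in\overline O(d-1)}\lambda_{i,o}(d)x_o$ for all $i\in I(d-1)$, subject to $\lambda_{i,o}(d)x_o\le\beta_{i,o}(d)$ for $o\in O(d-1)$ and $\lambda_{i,o}(d)x_o\le p_{i,o}(d-1)$ for $o\in\tilde O(d-1)$. For $i\in I(d-1)$: $\omega_{i,o}(d)=\omega_{i,o}(d-1)-\lambda_{i,o}(d)x^*_o(d)$ if $o\in O(d-1)$ and $0$ otherwise; $p_{i,o}(d)=p_{i,o}(d-1)-\mathbf 1[o\in\tilde O_i(d-1)]\lambda_{i,o}(d)x^*_o(d)+\gamma_{i,o}(d)x^*_i(d)$ (with $\gamma_{i,o}(d)=0$ for $o\notin\overline O(d-1)$). For $i\notin I(d-1)$, $\omega_i(d)=\omega_i(d-1)$, $p_i(d)=p_i(d-1)$. Let $O(d)=\{o\in O(d-1):\sum_i\omega_{i,o}(d)>0\}$. If $O(d)=\emptyset$ stop and output $p(d)$; otherwise go to step $d+1$. (Standing assumption: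 the maximum solution exists at each step and the procedure ends after finitely many steps.) An FTTC mechanism is specified by a rule choosing $\lambda(d),\beta(d),\gamma(d)$ at every step. *)

(* Defs.v *)
From mathcomp Require Import all_boot all_order all_algebra.
From mathcomp Require Import reals.
Set Implicit Arguments. Unset Strict Implicit. Unset Printing Implicit Defensive.
Import Order.TTheory GRing.Theory Num.Theory.
Local Open Scope ring_scope.

Section FEE.
Variables (R : realType) (I O : finType).

(** Preferences: [pref i a b] means  a ≿_i b. *)
Definition weak_order (pref : I -> rel O) : Prop :=
  (forall i a b, pref i a b || pref i b a) /\
  (forall i a b c, pref i a b -> pref i b c -> pref i a c).

Definition indiff (pref : I -> rel O) i a b := pref i a b && pref i b a.

Definition quota (om : I -> O -> R) (o : O) : R := \sum_(i : I) om i o.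

Definition FEE_endowment (om : I -> O -> R) : Prop :=
  (forall i o, 0 <= om i o <= 1) /\
  (forall i, \sum_(o : O) om i o <= 1) /\
  (forall o, exists n : nat, quota om o = n%:R).

Definition is_assignment (om : I -> O -> R) (p : I -> O -> R) : Prop :=
  (forall i o, 0 <= p i o) /\
  (forall o, \sum_(i : I) p i o <= quota om o) /\
  (forall i, \sum_(o : O) p i o <= 1).

Definition sd_ge (pref : I -> rel O) i (l l' : O -> R) : Prop :=
  forall o, \sum_(o' | pref i o' o) l' o' <= \sum_(o' | pref i o' o) l o'.

Definition sd_gt (pref : I -> rel O) i (l l' : O -> R) : Prop :=
  sd_ge pref i l l' /\
  exists o, \sum_(o' | pref i o' o) l' o' < \sum_(o' | pref i o' o) l o'.

Definition individually_rational pref (om p : I -> O -> R) : Prop :=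
  forall i, sd_ge pref i (p i) (om i).

Definition sd_efficient pref (om p : I -> O -> R) : Prop :=
  ~ exists p' : I -> O -> R,
      [/\ is_assignment om p',
          (forall i, sd_ge pref i (p' i) (p i)) &
          exists j, sd_gt pref j (p' j) (p j)].

Definition tildeset pref (p : I -> O -> R) i (T U : {set O}) : {set O} :=
  [set o' | [&& o' \notin U, 0 < p i o' & [exists o in T, indiff pref i o o']]].

(** [levels pref p Ocur k] = (T_k, L_k, T_0 ∪ … ∪ T_k, L_1 ∪ … ∪ L_k), with L_0 = ∅.
    Once some L_k is empty, T_k is empty and all later levels are empty, so
    iterating beyond the stopping index is harmless. *)
Fixpoint levels pref (p : I -> O -> R) (Ocur : {set O}) (k : nat)
  : {set O} * {set I} * {set O} * {set I} :=
  match k with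
  | 0 => (Ocur, set0, Ocur, set0)
  | k'.+1 =>
      let: (T, _, U, LU) := levels pref p Ocur k' in
      let L' := [set i | (i \notin LU) && (tildeset pref p i T U != set0)] in
      let T' := \bigcup_(i in L') tildeset pref p i T U in
      (T', L', U :|: T', LU :|: L')
  end.

Definition Tlev pref p Ocur k : {set O} := (levels pref p Ocur k).1.1.1.
Definition Llev pref p Ocur k : {set I} := (levels pref p Ocur k).1.1.2.
Definition Ulev pref p Ocur k : {set O} := (levels pref p Ocur k).1.2.

(** All nonempty levels have index at most #|I| + 1. *)
Definition nlev : nat := #|I|.+2.

Definition Lall pref p Ocur : {set I} := \bigcup_(k < nlev) Llev pref p Ocur k.
Definition Ttilde pref p Ocur : {set O} := \bigcup_(k < nlev) Tlev pref p Ocur k.+1.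
Definition Otilde_i pref p Ocur i : {set O} :=
  \bigcup_(k < nlev | i \in Llev pref p Ocur k.+1)
     tildeset pref p i (Tlev pref p Ocur k) (Ulev pref p Ocur k).
Definition Obar pref p Ocur : {set O} := Ocur :|: Ttilde pref p Ocur.

Definition Iact pref (om p : I -> O -> R) Ocur : {set I} :=
  Lall pref p Ocur :|: [set i | 0 < \sum_(o : O) om i o].

Definition Bset pref p Ocur i : {set O} :=
  [set o in Obar pref p Ocur | [forall o' in Obar pref p Ocur, pref i o o']].

Definition Aset pref p Ocur i : {set O} :=
  [set o in Bset pref p Ocur i |
     [exists k : 'I_nlev,
        (o \in Tlev pref p Ocur k) &&
        [forall k' : 'I_nlev, (k' < k)%N ==>
            (Bset pref p Ocur i :&: Tlev pref p Ocur k' == set0)]]].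

Definition valid_choice pref (om p : I -> O -> R) (Ocur : {set O})
    (lam beta gam : I -> O -> R) : Prop :=
  let Ia := Iact pref om p Ocur in
  let Ob := Obar pref p Ocur in
  (forall i o, i \in Ia -> o \in Ob -> 0 <= lam i o) /\
  (forall o, o \in Ob -> \sum_(i in Ia) lam i o = 1) /\
  (forall i o, i \in Ia -> o \in Ocur -> 0 < lam i o -> 0 < om i o) /\
  (forall i o, i \in Ia -> o \in Ttilde pref p Ocur -> 0 < lam i o ->
      o \in Otilde_i pref p Ocur i) /\
  (forall i o, i \in Ia -> o \in Ocur -> 0 <= beta i o <= om i o) /\
  (forall i o, i \in Ia -> o \in Ob -> 0 <= gam i o) /\
  (forall i, i \in Ia -> \sum_(o in Ob) gam i o = 1) /\
  (forall i o, i \in Ia -> o \in Ob -> 0 < gam i o -> o \in Aset pref p Ocur i).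

(** Nonnegative solutions of the trading system (x indexed by I(d-1) ∪ Obar(d-1)). *)
Definition trade_feasible pref (om p : I -> O -> R) (Ocur : {set O})
    (lam beta gam : I -> O -> R) (xI : I -> R) (xO : O -> R) : Prop :=
  let Ia := Iact pref om p Ocur in
  let Ob := Obar pref p Ocur in
  (forall i, i \in Ia -> 0 <= xI i) /\
  (forall o, o \in Ob -> 0 <= xO o) /\
  (forall o, o \in Ob -> xO o = \sum_(i in Ia) gam i o * xI i) /\
  (forall i, i \in Ia -> xI i = \sum_(o in Ob) lam i o * xO o) /\
  (forall i o, i \in Ia -> o \in Ocur -> lam i o * xO o <= beta i o) /\
  (forall i o, i \in Ia -> o \in Ttilde pref p Ocur -> lam i o * xO o <= p i o).

Definition max_solution pref (om p : I -> O -> R) (Ocur : {set O})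
    (lam beta gam : I -> O -> R) (xI : I -> R) (xO : O -> R) : Prop :=
  trade_feasible pref om p Ocur lam beta gam xI xO /\
  forall yI yO, trade_feasible pref om p Ocur lam beta gam yI yO ->
    (forall i, i \in Iact pref om p Ocur -> yI i <= xI i) /\
    (forall o, o \in Obar pref p Ocur -> yO o <= xO o).

Definition FTTC_step pref (om p : I -> O -> R) (Ocur : {set O})
    (om' p' : I -> O -> R) (Onext : {set O}) : Prop :=
  Ocur != set0 /\
  exists (lam beta gam : I -> O -> R) (xI : I -> R) (xO : O -> R),
    [/\ valid_choice pref om p Ocur lam beta gam,
        max_solution pref om p Ocur lam beta gam xI xO,
        (forall i o, om' i o =
           if i \in Iact pref om p Ocur then
             (if o \in Ocur then om i o - lam i o * xO o else 0)
           else om i o),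
        (forall i o, p' i o =
           if i \in Iact pref om p Ocur then
             p i o
             - (if o \in Otilde_i pref p Ocur i then lam i o * xO o else 0)
             + (if o \in Obar pref p Ocur then gam i o * xI i else 0)
           else p i o) &
        Onext = [set o in Ocur | 0 < \sum_(i : I) om' i o]].

(** Any history-dependent
    rule choosing λ, β, γ yields such a run, and every such run arises from some rule. *)
Definition FTTC_run pref (om : I -> O -> R) (D : nat)
    (omd pd : nat -> I -> O -> R) (Od : nat -> {set O}) : Prop :=
  [/\ (forall i o, omd 0%N i o = om i o),
      (forall i o, pd 0%N i o = 0),
      Od 0%N = setT,
      (forall d, (d < D)%N ->
         FTTC_step pref (omd d) (pd d) (Od d) (omd d.+1) (pd d.+1) (Od d.+1)) &
      Od D = set0].

End FEE.

(* Main.v *)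
Require Import Defs.
From mathcomp Require Import all_boot all_order all_algebra.
From mathcomp Require Import reals.
From mathcomp Require Import lra.
From Stdlib Require Import Classical ClassicalEpsilon.
Set Implicit Arguments. Unset Strict Implicit. Unset Printing Implicit Defensive.
Import Order.TTheory GRing.Theory Num.Theory.
Local Open Scope ring_scope.

Section Levels.
Variables (R : realType) (I O : finType) (pref : I -> rel O).
Variables (p : I -> O -> R) (Ocur : {set O}).

Definition LUlev k : {set I} := (levels pref p Ocur k).2.

Lemma lev0 : [/\ Tlev pref p Ocur 0 = Ocur, Llev pref p Ocur 0 = set0,
   Ulev pref p Ocur 0 = Ocur & LUlev 0 = set0].
Proof. by []. Qed.

Lemma levS k :
  [/\ Llev pref p Ocur k.+1 = [set i | (i \notin LUlev k) &&
          (tildeset pref p i (Tlev pref p Ocur k) (Ulev pref p Ocur k) != set0)],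
      Tlev pref p Ocur k.+1 = \bigcup_(i in Llev pref p Ocur k.+1)
          tildeset pref p i (Tlev pref p Ocur k) (Ulev pref p Ocur k),
      Ulev pref p Ocur k.+1 = Ulev pref p Ocur k :|: Tlev pref p Ocur k.+1 &
      LUlev k.+1 = LUlev k :|: Llev pref p Ocur k.+1].
Proof.
rewrite /Tlev /Llev /Ulev /LUlev /=.
by case: (levels pref p Ocur k) => [[[T L] U] LU].
Qed.

Lemma tildesetP i (T U : {set O}) o :
  reflect [/\ o \notin U, 0 < p i o & exists2 y, y \in T & indiff pref i y o]
          (o \in tildeset pref p i T U).
Proof.
rewrite inE; apply: (iffP and3P) => [[-> -> /existsP[y /andP[yT yo]]]|[-> -> [y yT yo]]].
  by split=> //; exists y.
by split=> //; apply/existsP; exists y; rewrite yT.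
Qed.

Lemma tildeset0 i (U : {set O}) : tildeset pref p i set0 U = set0.
Proof.
apply/setP=> o; rewrite in_set0; apply/negbTE/negP => /tildesetP[_ _ [y]]; by rewrite inE.
Qed.

Lemma Tlev_sub_Ulev k : Tlev pref p Ocur k \subset Ulev pref p Ocur k.
Proof. by case: k => [|k] //; have [_ _ -> _] := levS k; apply: subsetUr. Qed.

Lemma Ocur_sub_Ulev k : Ocur \subset Ulev pref p Ocur k.
Proof.
elim: k => [|k IH] //; have [_ _ -> _] := levS k.
by apply: subset_trans IH (subsetUl _ _).
Qed.

Lemma Ulev_ex k o : o \in Ulev pref p Ocur k ->
  exists2 m, (m <= k)%N & o \in Tlev pref p Ocur m.
Proof.
elim: k => [|k IH]; first by exists 0%N.
have [_ _ -> _] := levS k; rewrite inE => /orP[/IH[m mk om]|ok].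
  by exists m => //; apply: leqW.
by exists k.+1.
Qed.

Lemma LUlev_ex k i : i \in LUlev k ->
  exists2 l, (l < k)%N & i \in Llev pref p Ocur l.+1.
Proof.
elim: k => [|k IH]; first by rewrite /LUlev /= inE.
have [_ _ _ ->] := levS k; rewrite inE => /orP[/IH[m mk om]|ok].
  by exists m => //; apply: ltnW.
by exists k.
Qed.

Lemma Tlev_card k : Tlev pref p Ocur k != set0 -> (k <= #|LUlev k|)%N.
Proof.
elim: k => [|k IH] // HT.
have [HL HT' _ HLU] := levS k.
have [o oT] := set0Pn _ HT; rewrite HT' in oT.
case/bigcupP: oT => i iL /tildesetP[_ _ [y yT _]].
have Hne : Llev pref p Ocur k.+1 != set0 by apply/set0Pn; exists i.
have HTk : Tlev pref p Ocur k != set0 by apply/set0Pn; exists y.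
have := IH HTk; rewrite HLU cardsU.
have -> : LUlev k :&: Llev pref p Ocur k.+1 = set0.
  apply/setP=> j; rewrite !inE HL inE; by case: (j \in LUlev k).
rewrite cards0 subn0 => Hk.
have : (0 < #|Llev pref p Ocur k.+1|)%N by rewrite card_gt0 Hne.
move=> H0; have := leq_add Hk H0; by rewrite addn1.
Qed.

Lemma Tlev_bound k : Tlev pref p Ocur k != set0 -> (k <= #|I|)%N.
Proof. move/Tlev_card => H; apply: leq_trans H _; exact: max_card. Qed.

Lemma Obar_ex o : o \in Obar pref p Ocur ->
  exists2 k, (k <= #|I|)%N & o \in Tlev pref p Ocur k.
Proof.
rewrite /Obar inE => /orP[oc|]; first by exists 0%N.
rewrite /Ttilde => /bigcupP[k _ ok]; exists k.+1 => //.
apply: Tlev_bound; by apply/set0Pn; exists o.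
Qed.

Lemma Tlev_Obar k o : (k <= nlev I)%N -> o \in Tlev pref p Ocur k -> o \in Obar pref p Ocur.
Proof.
rewrite /Obar inE; case: k => [|k] kn ok; first by rewrite ok.
apply/orP; right; apply/bigcupP; by exists (Ordinal kn).
Qed.

Lemma Ulev_Obar k o : (k <= nlev I)%N -> o \in Ulev pref p Ocur k -> o \in Obar pref p Ocur.
Proof.
move=> kn /Ulev_ex[m mk om]; apply: (@Tlev_Obar m) => //; exact: leq_trans kn.
Qed.

Lemma Ttilde_notcur o : o \in Ttilde pref p Ocur -> o \notin Ocur.
Proof.
move=> /bigcupP[k _]; have [_ -> _ _] := levS k.
move=> /bigcupP[i _ /tildesetP[oU _ _]].
by apply: contra oU; apply: (subsetP (Ocur_sub_Ulev k)).
Qed.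

Lemma Otilde_Ttilde i o : o \in Otilde_i pref p Ocur i -> o \in Ttilde pref p Ocur.
Proof.
move=> /bigcupP[k ik ok]; apply/bigcupP; exists k => //.
have [_ -> _ _] := levS k; apply/bigcupP; by exists i.
Qed.

End Levels.

Section Closure.
Variables (R : realType) (I O : finType) (pref : I -> rel O).
Hypothesis Hwo : weak_order pref.

Inductive inC (p : I -> O -> R) (Ocur : {set O}) : O -> Prop :=
| inC_cur o : o \in Ocur -> inC p Ocur o
| inC_step j o o' : inC p Ocur o -> 0 < p j o' -> indiff pref j o o' -> inC p Ocur o'.

Lemma ptrans i a b c : pref i a b -> pref i b c -> pref i a c.
Proof. by case: Hwo => _; apply. Qed.

Lemma ptot i a b : pref i a b || pref i b a.
Proof. by case: Hwo. Qed.

Lemma prefl i a : pref i a a.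
Proof. by have := ptot i a a; rewrite orbb. Qed.

Lemma Tlev_inC p Ocur k o : o \in Tlev pref p Ocur k -> inC p Ocur o.
Proof.
elim: k o => [|k IH] o; first by move=> oc; apply: inC_cur.
have [_ -> _ _] := levS pref p Ocur k.
case/bigcupP => i _ /tildesetP[_ pio [y yT yo]].
exact: (inC_step (IH _ yT) pio yo).
Qed.

Lemma Obar_inC p Ocur o : o \in Obar pref p Ocur -> inC p Ocur o.
Proof. by case/Obar_ex => k _; apply: Tlev_inC. Qed.

Lemma inC_Obar p Ocur :
  (forall i b a, 0 < p i b -> inC p Ocur a -> pref i b a) ->
  forall o, inC p Ocur o -> o \in Obar pref p Ocur.
Proof.
move=> K o; elim=> {o} [o oc|j o o' Hc IH pj ind].
  by apply: (@Tlev_Obar _ _ _ _ _ _ 0%N).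
have [k kI ok] := Obar_ex IH.
have knl : (k <= nlev I)%N by rewrite /nlev; apply: leq_trans kI _; apply: leqW.
case: (boolP (o' \in Ulev pref p Ocur k)) => oU; first exact: (Ulev_Obar knl oU).
case: (boolP (j \in LUlev pref p Ocur k)) => jL.
  have [l lk jl] := LUlev_ex jL.
  have [HL _ _ _] := levS pref p Ocur l.
  move: (jl); rewrite HL inE => /andP[_ /set0Pn[o'' /tildesetP[o''U pjo'' [y yT yo'']]]].
  have Ky : pref j o' y by apply: K pj (Tlev_inC yT).
  have Ko : pref j o'' o by apply: K pjo'' Hc.
  move: yo'' ind; rewrite /indiff => /andP[y1 y2] /andP[o1 o2].
  have yo' : indiff pref j y o'.
    by rewrite /indiff Ky andbT; apply: ptrans y1 (ptrans Ko o1).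
  case: (boolP (o' \in Ulev pref p Ocur l)) => o'U.
    apply: (Ulev_Obar _ o'U); apply: leq_trans knl; exact: ltnW.
  apply: (@Tlev_Obar _ _ _ _ _ _ l.+1).
    exact: leq_trans lk knl.
  have [_ -> _ _] := levS pref p Ocur l.
  apply/bigcupP; exists j => //; apply/tildesetP; split=> //; by exists y.
have o'T : o' \in tildeset pref p j (Tlev pref p Ocur k) (Ulev pref p Ocur k).
  by apply/tildesetP; split=> //; exists o.
apply: (@Tlev_Obar _ _ _ _ _ _ k.+1); first by rewrite /nlev ltnS; apply: leqW.
have [HL -> _ _] := levS pref p Ocur k.
apply/bigcupP; exists j => //; rewrite HL inE jL /=; apply/set0Pn; by exists o'.
Qed.

End Closure.

Section StepFacts.
Variables (R : realType) (I O : finType) (pref : I -> rel O).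
Hypothesis Hwo : weak_order pref.
Variables (om p : I -> O -> R) (Ocur : {set O}) (om' p' : I -> O -> R) (On : {set O}).
Variables (lam beta gam : I -> O -> R) (xI : I -> R) (xO : O -> R).
Hypothesis Hv : valid_choice pref om p Ocur lam beta gam.
Hypothesis Hf : trade_feasible pref om p Ocur lam beta gam xI xO.
Hypothesis Hom' : forall i o, om' i o =
           if i \in Iact pref om p Ocur then
             (if o \in Ocur then om i o - lam i o * xO o else 0)
           else om i o.
Hypothesis Hp' : forall i o, p' i o =
           if i \in Iact pref om p Ocur then
             p i o
             - (if o \in Otilde_i pref p Ocur i then lam i o * xO o else 0)
             + (if o \in Obar pref p Ocur then gam i o * xI i else 0)
           else p i o.
Hypothesis HOn : On = [set o in Ocur | 0 < \sum_(i : I) om' i o].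
Hypothesis Hom0 : forall i o, 0 <= om i o.
Hypothesis Hp0 : forall i o, 0 <= p i o.
Hypothesis Hoff : forall i o, o \notin Ocur -> om i o = 0.

Local Notation Ia := (Iact pref om p Ocur).
Local Notation Ob := (Obar pref p Ocur).

Let lam0 : forall i o, i \in Ia -> o \in Ob -> 0 <= lam i o.
Proof. by case: Hv. Qed.
Let lamsum : forall o, o \in Ob -> \sum_(i in Ia) lam i o = 1.
Proof. by case: Hv => _ []. Qed.
Let lamtil : forall i o, i \in Ia -> o \in Ttilde pref p Ocur -> 0 < lam i o ->
      o \in Otilde_i pref p Ocur i.
Proof. by case: Hv => _ [_ [_ []]]. Qed.
Let betab : forall i o, i \in Ia -> o \in Ocur -> 0 <= beta i o <= om i o.
Proof. by case: Hv => _ [_ [_ [_ []]]]. Qed.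
Let gam0 : forall i o, i \in Ia -> o \in Ob -> 0 <= gam i o.
Proof. by case: Hv => _ [_ [_ [_ [_ []]]]]. Qed.
Let gamsum : forall i, i \in Ia -> \sum_(o in Ob) gam i o = 1.
Proof. by case: Hv => _ [_ [_ [_ [_ [_ []]]]]]. Qed.
Let gamA : forall i o, i \in Ia -> o \in Ob -> 0 < gam i o -> o \in Aset pref p Ocur i.
Proof. by case: Hv => _ [_ [_ [_ [_ [_ []]]]]]. Qed.
Let xI0 : forall i, i \in Ia -> 0 <= xI i.
Proof. by case: Hf. Qed.
Let xO0 : forall o, o \in Ob -> 0 <= xO o.
Proof. by case: Hf => _ []. Qed.
Let xOeq : forall o, o \in Ob -> xO o = \sum_(i in Ia) gam i o * xI i.
Proof. by case: Hf => _ [_ []]. Qed.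
Let xIeq : forall i, i \in Ia -> xI i = \sum_(o in Ob) lam i o * xO o.
Proof. by case: Hf => _ [_ [_ []]]. Qed.
Let bnd1 : forall i o, i \in Ia -> o \in Ocur -> lam i o * xO o <= beta i o.
Proof. by case: Hf => _ [_ [_ [_ []]]]. Qed.
Let bnd2 : forall i o, i \in Ia -> o \in Ttilde pref p Ocur -> lam i o * xO o <= p i o.
Proof. by case: Hf => _ [_ [_ [_ []]]]. Qed.

Definition Lo i o := if o \in Otilde_i pref p Ocur i then lam i o * xO o else 0.
Definition Mo i o := if o \in Ocur then lam i o * xO o else 0.
Definition Go i o := if o \in Ob then gam i o * xI i else 0.

Lemma cur_Ob o : o \in Ocur -> o \in Ob.
Proof. by rewrite /Obar inE => ->. Qed.

Lemma til_Ob o : o \in Ttilde pref p Ocur -> o \in Ob.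
Proof. by rewrite /Obar inE => ->; rewrite orbT. Qed.

Lemma Go_ge0 i o : i \in Ia -> 0 <= Go i o.
Proof. by move=> iA; rewrite /Go; case: ifP => // oB; apply: mulr_ge0; auto. Qed.

Lemma LMo i o : i \in Ia -> Lo i o + Mo i o = if o \in Ob then lam i o * xO o else 0.
Proof.
move=> iA; rewrite /Lo /Mo.
case: (boolP (o \in Ocur)) => oc.
  have -> : (o \in Otilde_i pref p Ocur i) = false.
    apply/negP => /Otilde_Ttilde /Ttilde_notcur; by rewrite oc.
  by rewrite (cur_Ob oc) add0r.
rewrite addr0; case: (boolP (o \in Ttilde pref p Ocur)) => ot.
  rewrite (til_Ob ot); case: ifP => // oO.
  have := lam0 iA (til_Ob ot); rewrite le0r => /orP[/eqP->|/(lamtil iA ot)]; first by rewrite mul0r.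
  by rewrite oO.
have -> : (o \in Ob) = false by rewrite /Obar inE (negbTE oc) (negbTE ot).
case: ifP => // /Otilde_Ttilde; by rewrite (negbTE ot).
Qed.

Lemma LMo_ge0 i o : i \in Ia -> 0 <= Lo i o + Mo i o.
Proof. by move=> iA; rewrite LMo //; case: ifP => // oB; apply: mulr_ge0; auto. Qed.

Lemma Lo_ge0 i o : i \in Ia -> 0 <= Lo i o.
Proof.
move=> iA; rewrite /Lo; case: ifP => // /Otilde_Ttilde/til_Ob oB; apply: mulr_ge0; auto.
Qed.

Lemma p'E i o : i \in Ia -> p' i o = p i o - Lo i o + Go i o.
Proof. by move=> iA; rewrite Hp' iA. Qed.

Lemma om'E i o : i \in Ia -> om' i o = om i o - Mo i o.
Proof.
move=> iA; rewrite Hom' iA /Mo; case: ifP => // /negbT oc; by rewrite Hoff // subr0.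
Qed.

Lemma sum_Go i : i \in Ia -> \sum_o Go i o = xI i.
Proof.
move=> iA; rewrite /Go -big_mkcond /= -big_distrl /= gamsum // mul1r.
by [].
Qed.

Lemma sum_LMo i : i \in Ia -> \sum_o (Lo i o + Mo i o) = xI i.
Proof.
move=> iA; under eq_bigr do rewrite LMo //.
by rewrite -big_mkcond /= xIeq.
Qed.

Lemma step_p_nonneg i o : 0 <= p' i o.
Proof.
rewrite Hp'; case: ifP => iA //.
have := Go_ge0 o iA; rewrite /Go => HG.
rewrite -[X in X - _ + _]/(p i o) -/(Lo i o) -/(Go i o).
apply: addr_ge0 (Go_ge0 o iA); rewrite subr_ge0 /Lo; case: ifP => // /Otilde_Ttilde ot.
exact: bnd2.
Qed.

Lemma step_om_nonneg i o : 0 <= om' i o.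
Proof.
rewrite Hom'; case: ifP => iA //; case: ifP => // oc.
have /andP[_ b2] := betab iA oc; rewrite subr_ge0; exact: le_trans (bnd1 iA oc) b2.
Qed.

Lemma step_On_sub : On \subset Ocur.
Proof. by rewrite HOn; apply/subsetP => o; rewrite inE => /andP[]. Qed.

Lemma step_om_off i o : o \notin On -> om' i o = 0.
Proof.
move=> oN; case: (boolP (o \in Ocur)) => oc; last first.
  by rewrite Hom'; case: ifP => _; [rewrite (negbTE oc)|rewrite Hoff].
move: oN; rewrite HOn inE oc /= -leNgt => Hs.
have H0 : forall j, true -> 0 <= om' j o by move=> j _; apply: step_om_nonneg.
have /eqP: \sum_j om' j o == 0 by rewrite eq_le Hs /=; apply: sumr_ge0.
move=> E; apply: (psumr_eq0P _ E) => // j _; exact: step_om_nonneg.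
Qed.

Lemma step_p_pos i b : 0 < p' i b ->
  0 < p i b \/ (i \in Ia /\ b \in Bset pref p Ocur i).
Proof.
rewrite Hp'; case: ifP => iA; last by left.
rewrite -/(Lo i b) -/(Go i b) => H.
case: (boolP (0 < gam i b)) => g0.
  case: (boolP (b \in Ob)) => bB.
    right; split=> //; have := gamA iA bB g0; rewrite /Aset inE; by case/andP.
  by move: H; rewrite /Go (negbTE bB) addr0 => H; left; apply: lt_le_trans H _; rewrite lerBlDr lerDl Lo_ge0.
left; have HG : Go i b = 0.
  rewrite /Go; case: ifP => // bB; have := gam0 iA bB; rewrite le_eqVlt (negbTE g0) orbF.
  by move/eqP <-; rewrite mul0r.
move: H; rewrite HG addr0 => H; apply: lt_le_trans H _; by rewrite lerBlDr lerDl Lo_ge0.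
Qed.


Lemma pom'E i o : i \in Ia ->
  p' i o + om' i o = (p i o + om i o) + (Go i o - (Lo i o + Mo i o)).
Proof. move=> iA; rewrite p'E // om'E //; lra. Qed.

Lemma pom'N i o : i \notin Ia -> p' i o + om' i o = p i o + om i o.
Proof. by move=> iA; rewrite Hp' Hom' (negbTE iA). Qed.

Lemma sumIa_Go o : \sum_(i in Ia) Go i o = if o \in Ob then xO o else 0.
Proof.
rewrite /Go; case: ifP => oB; first by rewrite xOeq.
by rewrite big1.
Qed.

Lemma sumIa_LM o : \sum_(i in Ia) (Lo i o + Mo i o) = if o \in Ob then xO o else 0.
Proof.
rewrite (eq_bigr (fun i => if o \in Ob then lam i o * xO o else 0)); last first.
  by move=> i iA; rewrite LMo.
case: ifP => oB; last by rewrite big1.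
by rewrite -big_distrl /= lamsum // mul1r.
Qed.

Lemma step_conserve o : \sum_i (p' i o + om' i o) = \sum_i (p i o + om i o).
Proof.
rewrite (bigID (fun i => i \in Ia)) [RHS](bigID (fun i => i \in Ia)) /=.
congr (_ + _); last by apply: eq_bigr => i iA; rewrite pom'N.
rewrite (eq_bigr (fun i => (p i o + om i o) + (Go i o - (Lo i o + Mo i o)))); last first.
  by move=> i iA; rewrite pom'E.
by rewrite big_split /= sumrB sumIa_Go sumIa_LM subrr addr0.
Qed.

Lemma Bset_pref i o o1 : o \in Bset pref p Ocur i -> o1 \in Ob -> pref i o o1.
Proof. by rewrite inE => /andP[_ /forall_inP H] /H. Qed.

Lemma Go_pos i o : i \in Ia -> Go i o != 0 -> o \in Bset pref p Ocur i.
Proof.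
move=> iA; rewrite /Go; case: ifP => oB; last by rewrite eqxx.
case: (boolP (0 < gam i o)) => g0.
  by move=> _; have := gamA iA oB g0; rewrite inE => /andP[].
have -> : gam i o = 0.
  by apply/eqP; rewrite eq_le (gam0 iA oB) andbT leNgt.
by rewrite mul0r eqxx.
Qed.

Lemma step_IR i o0 :
  \sum_(o | pref i o o0) (p i o + om i o) <= \sum_(o | pref i o o0) (p' i o + om' i o).
Proof.
case: (boolP (i \in Ia)) => iA; last by rewrite [X in _ <= X](eq_bigr _ (fun o _ => pom'N o iA)).
rewrite [X in _ <= X](eq_bigr _ (fun o _ => pom'E o iA)) [X in _ <= X]big_split /= lerDl sumrB subr_ge0.
case: (boolP [exists o1, (o1 \in Ob) && pref i o1 o0]).
  case/existsP => o1 /andP[o1B o1p].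
  have HG : \sum_(o | pref i o o0) Go i o = xI i.
    rewrite -(sum_Go iA) [RHS](bigID (fun o => pref i o o0)) /= [X in _ = _ + X]big1 ?addr0 //.
    move=> o op; case: (eqVneq (Go i o) 0) => // /(Go_pos iA) oB.
    by rewrite (ptrans Hwo (Bset_pref oB o1B) o1p) in op.
  rewrite HG -(sum_LMo iA) [X in _ <= X](bigID (fun o => pref i o o0)) /= lerDl.
  by apply: sumr_ge0 => o _; apply: LMo_ge0.
move=> /existsPn Hn.
rewrite big1; first by apply: sumr_ge0 => o _; apply: Go_ge0.
move=> o op; rewrite LMo //; case: ifP => // oB.
by have := Hn o; rewrite oB op.
Qed.

End StepFacts.

Section Run.
Variables (R : realType) (I O : finType) (pref : I -> rel O).
Hypothesis Hwo : weak_order pref.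
Variables (om : I -> O -> R) (D : nat) (omd pd : nat -> I -> O -> R) (Od : nat -> {set O}).
Hypothesis Hfee : FEE_endowment om.
Hypothesis Hrun : FTTC_run pref om D omd pd Od.

Lemma stepE d : (d < D)%N -> exists lam beta gam (xI : I -> R) (xO : O -> R),
  [/\ valid_choice pref (omd d) (pd d) (Od d) lam beta gam,
      trade_feasible pref (omd d) (pd d) (Od d) lam beta gam xI xO,
      (forall i o, omd d.+1 i o =
           if i \in Iact pref (omd d) (pd d) (Od d) then
             (if o \in Od d then omd d i o - lam i o * xO o else 0)
           else omd d i o),
      (forall i o, pd d.+1 i o =
           if i \in Iact pref (omd d) (pd d) (Od d) then
             pd d i o
             - (if o \in Otilde_i pref (pd d) (Od d) i then lam i o * xO o else 0)
             + (if o \in Obar pref (pd d) (Od d) then gam i o * xI i else 0)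
           else pd d i o) &
      Od d.+1 = [set o in Od d | 0 < \sum_(i : I) omd d.+1 i o]].
Proof.
move=> dD; case: Hrun => _ _ _ Hs _.
case: (Hs d dD) => _ [lam [beta [gam [xI [xO [Hv [Hf _] Hom' Hp' HOn]]]]]].
by exists lam, beta, gam, xI, xO.
Qed.

Lemma inv_basic d : (d <= D)%N ->
  [/\ (forall i o, 0 <= omd d i o), (forall i o, 0 <= pd d i o) &
      (forall i o, o \notin Od d -> omd d i o = 0)].
Proof.
elim: d => [|d IH] dD.
  case: Hrun => H0 Hp0 HO0 _ _; case: Hfee => Hb _.
  split=> i o; first by rewrite H0; case/andP: (Hb i o).
    by rewrite Hp0.
  by rewrite HO0 inE.
have [H1 H2 H3] := IH (ltnW dD).
have [lam [beta [gam [xI [xO [Hv Hf Hom' Hp' HOn]]]]]] := stepE dD.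
split.
- exact: (step_om_nonneg Hv Hf Hom' H1).
- exact: (step_p_nonneg Hv Hf Hp' H2).
- move=> i o; exact: (step_om_off Hv Hf Hom' HOn H1 H3 i).
Qed.

Lemma inv_cons d : (d <= D)%N -> forall o, \sum_i (pd d i o + omd d i o) = quota om o.
Proof.
elim: d => [|d IH] dD o.
  case: Hrun => H0 Hp0 _ _ _; rewrite /quota; apply: eq_bigr => i _.
  by rewrite H0 Hp0 add0r.
have [H1 H2 H3] := inv_basic (ltnW dD).
have [lam [beta [gam [xI [xO [Hv Hf Hom' Hp' HOn]]]]]] := stepE dD.
rewrite (step_conserve Hv Hf Hom' Hp' H3); exact: IH (ltnW dD) o.
Qed.

Lemma inv_IR d : (d <= D)%N -> forall i o0,
  \sum_(o | pref i o o0) om i o <= \sum_(o | pref i o o0) (pd d i o + omd d i o).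
Proof.
elim: d => [|d IH] dD i o0.
  case: Hrun => H0 Hp0 _ _ _; rewrite le_eqVlt; apply/orP; left; apply/eqP; apply: eq_bigr => o _.
  by rewrite H0 Hp0 add0r.
have [H1 H2 H3] := inv_basic (ltnW dD).
have [lam [beta [gam [xI [xO [Hv Hf Hom' Hp' HOn]]]]]] := stepE dD.
apply: le_trans (IH (ltnW dD) i o0) _.
exact: (step_IR Hwo Hv Hf Hom' Hp' H3).
Qed.

Local Notation C d := (inC pref (pd d) (Od d)).

Lemma mono d a : (d < D)%N -> C d.+1 a -> C d a.
Proof.
move=> dD.
have [lam [beta [gam [xI [xO [Hv Hf Hom' Hp' HOn]]]]]] := stepE dD.
elim=> {a} [o oc|j o o' _ IH pj ind].
  by apply: inC_cur; apply: (subsetP (step_On_sub HOn)).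
case: (step_p_pos Hv Hf Hp' pj) => [pj'|[_ oB]].
  exact: (inC_step IH pj' ind).
by apply: Obar_inC; move: oB; rewrite inE => /andP[].
Qed.

Lemma mono_chain d m a : (d <= m)%N -> (m <= D)%N -> C m a -> C d a.
Proof.
elim: m => [|m IH] dm mD; first by rewrite leqn0 in dm; rewrite (eqP dm).
case: (ltngtP d m.+1) => [dm'|H|->]; last by []; first last.
  by rewrite ltnNge dm in H.
move=> Hc; apply: (IH (dm' : (d <= m)%N) (ltnW mD)); exact: mono mD Hc.
Qed.

Lemma inv_K d : (d <= D)%N -> forall i b a, 0 < pd d i b -> C d a -> pref i b a.
Proof.
elim: d => [|d IH] dD i b a.
  by case: Hrun => _ Hp0 _ _ _; rewrite Hp0 ltxx.
move=> pb Ha; have Ha' := mono dD Ha.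
have [lam [beta [gam [xI [xO [Hv Hf Hom' Hp' HOn]]]]]] := stepE dD.
case: (step_p_pos Hv Hf Hp' pb) => [pb'|[_ bB]].
  exact: IH (ltnW dD) _ _ _ pb' Ha'.
apply: (Bset_pref bB); exact: (inC_Obar Hwo (IH (ltnW dD)) Ha').
Qed.

Lemma back_pos d m i b : (d <= m)%N -> (m <= D)%N -> ~ C d b -> 0 < pd m i b -> 0 < pd d i b.
Proof.
elim: m => [|m IH] dm mD nb pm; first by rewrite leqn0 in dm; rewrite (eqP dm).
case: (ltngtP d m.+1) => [dm'|H|-> //]; last by rewrite ltnNge dm in H.
have [lam [beta [gam [xI [xO [Hv Hf Hom' Hp' HOn]]]]]] := stepE mD.
case: (step_p_pos Hv Hf Hp' pm) => [pm'|[_ bB]].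
  exact: IH (dm' : (d <= m)%N) (ltnW mD) nb pm'.
exfalso; apply: nb; apply: (mono_chain (dm' : (d <= m)%N) (ltnW mD)).
by apply: Obar_inC; move: bB; rewrite inE => /andP[].
Qed.

Lemma weakC d i a b : (d < D)%N -> pref i a b -> 0 < pd D i b -> C d a -> C d b.
Proof.
move=> dD ab pb Ha; case: (classic (C d b)) => // nb.
have pd0 := back_pos (ltnW dD) (leqnn D) nb pb.
have ba := inv_K (ltnW dD) pd0 Ha.
by apply: (inC_step Ha pd0); rewrite /indiff ab ba.
Qed.

Lemma strictC i a b : pref i a b -> ~~ pref i b a -> 0 < pd D i b ->
  exists2 d, (d < D)%N & C d b /\ ~ C d a.
Proof.
move=> ab nba pb; apply: NNPP => Hn.
have Himp : forall d, (d < D)%N -> C d b -> C d a.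
  move=> d dD Hb; apply: NNPP => Ha; apply: Hn; by exists d.
suff : forall m, (m <= D)%N -> 0 < pd m i b -> False by move/(_ D (leqnn D) pb).
elim=> [|m IH] mD pm.
  by case: Hrun => _ Hp0 _ _ _; move: pm; rewrite Hp0 ltxx.
have [lam [beta [gam [xI [xO [Hv Hf Hom' Hp' HOn]]]]]] := stepE mD.
case: (step_p_pos Hv Hf Hp' pm) => [pm'|[_ bB]]; first exact: IH (ltnW mD) pm'.
have Hb : C m b by apply: Obar_inC; move: bB; rewrite inE => /andP[].
have aO := inC_Obar Hwo (inv_K (ltnW mD)) (Himp m mD Hb).
by rewrite (Bset_pref bB aO) in nba.
Qed.

End Run.

Section Price.
Variables (R : realType) (I O : finType) (pref : I -> rel O).
Hypothesis Hwo : weak_order pref.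
Variables (om p : I -> O -> R) (phi : O -> nat).
Hypothesis Hp0 : forall i o, 0 <= p i o.
Hypothesis Hq : forall o, \sum_i p i o = quota om o.
Hypothesis Hw : forall i a b, 0 < p i b -> pref i a b -> (phi b <= phi a)%N.
Hypothesis Hs : forall i a b, 0 < p i b -> pref i a b -> ~~ pref i b a -> (phi b < phi a)%N.

Lemma price_eff : sd_efficient pref om p.
Proof.
move=> [p' [[Hp'0 [Hp'q _]] Hge [j [_ [o0 Hlt]]]]].
have stepA : forall i t, \sum_(o | (t <= phi o)%N) p i o <= \sum_(o | (t <= phi o)%N) p' i o.
  move=> i t.
  case: (boolP [exists b, (t <= phi b)%N && (0 < p i b)]); last first.
    move/existsPn => Hn; apply: (@le_trans _ _ 0); last by apply: sumr_ge0.
    rewrite -oppr_ge0 -sumrN; apply: sumr_ge0 => o to.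
    have := Hn o; rewrite to /= => H; by rewrite oppr_ge0 leNgt.
  case/existsP => b0 Pb0.
  set P := fun b => (t <= phi b)%N && (0 < p i b).
  set up := fun b => #|[set o | pref i o b]|.
  case: (@arg_maxnP _ b0 P up Pb0) => b Pb Hmax.
  have worst : forall b', P b' -> pref i b' b.
    move=> b' Pb'; apply: contraTT (Hmax b' Pb'); rewrite -ltnNge => nb.
    have bb' : pref i b b' by have := ptot Hwo i b' b; rewrite (negbTE nb).
    apply: proper_card; apply/properP; split.
      apply/subsetP => o; rewrite !inE => ob. exact: (ptrans Hwo ob bb').
    by exists b'; rewrite !inE ?prefl.
  case/andP: Pb => tb pb.
  apply: (@le_trans _ _ (\sum_(o | pref i o b) p i o)).
    rewrite big_mkcond [X in _ <= X]big_mkcond /=; apply: ler_sum => o _.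
    case: ifP => to; last by case: ifP.
    case: (boolP (0 < p i o)) => po.
      by rewrite (worst o) // /P to.
    by case: ifP => _ //; rewrite leNgt.
  apply: le_trans (Hge i b) _.
  rewrite big_mkcond [X in _ <= X]big_mkcond /=; apply: ler_sum => o _.
  case: ifP => ob; last by case: ifP.
  by rewrite (leq_trans tb (Hw pb ob)).
have [a Ua Hmin] := @arg_minnP _ o0 (fun a => pref j a o0) phi (prefl Hwo j o0).
set t := phi a.
have stepB : \sum_(o | (t <= phi o)%N) p j o < \sum_(o | (t <= phi o)%N) p' j o.
  apply: (@le_lt_trans _ _ (\sum_(o | pref j o o0) p j o)).
    rewrite big_mkcond [X in _ <= X]big_mkcond /=; apply: ler_sum => o _.
    case: ifP => to; last by case: ifP.
    case: (boolP (0 < p j o)) => po.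
      case: ifP => // no; exfalso.
      have o0o : pref j o0 o by have := ptot Hwo j o o0; rewrite no.
      have ao : pref j a o := ptrans Hwo Ua o0o.
      have noa : ~~ pref j o a.
        by apply/negP => oa; rewrite (ptrans Hwo oa Ua) in no.
      by have := Hs po ao noa; rewrite ltnNge to.
    by case: ifP => _ //; rewrite leNgt.
  apply: lt_le_trans Hlt _.
  rewrite big_mkcond [X in _ <= X]big_mkcond /=; apply: ler_sum => o _.
  case: ifP => oo; last by case: ifP.
  by rewrite (Hmin o oo).
have : \sum_i \sum_(o | (t <= phi o)%N) p i o < \sum_i \sum_(o | (t <= phi o)%N) p' i o.
  rewrite (bigD1 j) // [X in _ < X](bigD1 j) //=.
  apply: ltr_leD; first exact: stepB.
  by apply: ler_sum => i _; apply: stepA.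
rewrite exchange_big [X in _ < X]exchange_big /=.
rewrite (eq_bigr (fun o => quota om o)); last by move=> o _; rewrite Hq.
move=> H; have := lt_le_trans H (ler_sum _ (fun o _ => Hp'q o)); by rewrite ltxx.
Qed.

End Price.

Definition phiC (R : realType) (I O : finType) (pref : I -> rel O) (D : nat)
  (pd : nat -> I -> O -> R) (Od : nat -> {set O}) (a : O) : nat :=
  \sum_(d < D) (if excluded_middle_informative (inC pref (pd d) (Od d) a) then 0 else 1)%N.

Theorem proposition1 (R : realType) (I O : finType) (pref : I -> rel O)
    (om : I -> O -> R) (D : nat) (omd pd : nat -> I -> O -> R) (Od : nat -> {set O}) :
  weak_order pref ->
  FEE_endowment om ->
  FTTC_run pref om D omd pd Od ->
  individually_rational pref om (pd D) /\ sd_efficient pref om (pd D).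
Proof.
move=> Hwo Hfee Hrun.
have [_ Hp0 Hoff] := inv_basic Hfee Hrun (leqnn D).
have HOD : Od D = set0 by case: Hrun.
have Hz : forall i o, omd D i o = 0 by move=> i o; apply: Hoff; rewrite HOD inE.
split.
  move=> i o0; have := inv_IR Hwo Hfee Hrun (leqnn D) i o0.
  by under [X in _ <= X -> _]eq_bigr do rewrite Hz addr0.
apply: (@price_eff _ _ _ _ Hwo _ _ (phiC pref D pd Od)).
- exact: Hp0.
- move=> o; rewrite -(inv_cons Hfee Hrun (leqnn D) o).
  by apply: eq_bigr => i _; rewrite Hz addr0.
- move=> i a b pb ab; apply: leq_sum => d _.
  case: (excluded_middle_informative (inC pref (pd d) (Od d) a)) => Ha.
    have Hb := weakC Hwo Hrun (ltn_ord d) ab pb Ha.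
    by case: (excluded_middle_informative (inC pref (pd d) (Od d) b)).
  by case: (excluded_middle_informative (inC pref (pd d) (Od d) b)).
- move=> i a b pb ab nba.
  have [d dD [Hb Ha]] := strictC Hwo Hrun ab nba pb.
  rewrite /phiC (bigD1 (Ordinal dD)) // [X in (_ < X)%N](bigD1 (Ordinal dD)) //=.
  case: (excluded_middle_informative (inC pref (pd d) (Od d) b)) => // Hb1.
  case: (excluded_middle_informative (inC pref (pd d) (Od d) a)) => // Ha1.
  rewrite add0n add1n ltnS; apply: leq_sum => d' _.
  case: (excluded_middle_informative (inC pref (pd d') (Od d') a)) => Ha'.
    have Hb' := weakC Hwo Hrun (ltn_ord d') ab pb Ha'.
    by case: (excluded_middle_informative (inC pref (pd d') (Od d') b)).
  by case: (excluded_middle_informative (inC pref (pd d') (Od d') b)).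
Qed.
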